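(* Let $A$ be a finite set, $p : A \to [0,1]$, and $\gamma : \mathbb{N}^* \to (0,1]$ non-increasing; set $p_i(u) := \gamma(i)p(u)$. Let $\{X_i(u)\}_{i\ge1,u\in A}$ be independent with $X_i(u)\sim\mathrm{Bernoulli}(p_i(u))$. For $n \ge 1$ define $Z_n(u) := \mathds{1}\{X_1(u)=\dots=X_n(u)=0\}$, $R_n := \sum_{u\in A} Z_n(u)\,p_{n+1}(u)$, \[ U^\gamma_n(u) := \sum_{i=1}^n \mathds{1}\{X_i(u)=1,\ X_j(u)=0\ \forall j\in\{1,\dots,n\}\setminus\{i\}\}\,\frac{\gamma(n+1)}{\gamma(i)}, \] $\hat R_n := \frac1n\sum_{u\in A}U^\gamma_n(u)$, and $\lambda := \sum_{u\in A}p(u)$. Then \[ \mathbb{E}[R_n] - \mathbb{E}[\hat R_n] \in \left[-\gamma(n+1)\frac{\lambda}{n}, 0\right]. \]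
   Context: Influencer fatigue model: at the $i$-th selection of the influencer, node $u$ is activated with probability $\gamma(i)p(u)$, independently across nodes and selections. $R_n$ is the remaining potential for the $(n+1)$-th selection, $\hat R_n$ the reweighted Good-Turing estimator. *)

(* Defs.v *)
From HB Require Import structures.
From mathcomp Require Export all_boot all_order all_algebra.
Set Implicit Arguments. Unset Strict Implicit. Unset Printing Implicit Defensive.
Import Order.TTheory GRing.Theory Num.Theory.
Local Open Scope ring_scope.

(* p_i(u) := gamma(i) p(u); selections are indexed from 1. *)
Definition pi {R : realFieldType} {A : finType} (gamma : nat -> R) (p : A -> R)
  (i : nat) (u : A) : R := gamma i * p u.

(* Outcomes of the first n selections: omega (i, u) = X_{i+1}(u). *)
Definition Omega (n : nat) (A : finType) := {ffun 'I_n * A -> bool}.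

Definition prob {R : realFieldType} {A : finType} (gamma : nat -> R) (p : A -> R)
  (n : nat) (w : Omega n A) : R :=
  \prod_(k : 'I_n * A)
     (if w k then pi gamma p (k.1 : nat).+1 k.2 else 1 - pi gamma p (k.1 : nat).+1 k.2).

Definition Expect {R : realFieldType} {A : finType} (gamma : nat -> R) (p : A -> R)
  (n : nat) (f : Omega n A -> R) : R :=
  \sum_(w : Omega n A) prob gamma p w * f w.

Definition Zn {A : finType} (n : nat) (w : Omega n A) (u : A) : bool :=
  [forall i : 'I_n, ~~ w (i, u)].

Definition Rn {R : realFieldType} {A : finType} (gamma : nat -> R) (p : A -> R)
  (n : nat) (w : Omega n A) : R :=
  \sum_(u : A) (Zn w u)%:R * pi gamma p n.+1 u.

Definition Ugamma {R : realFieldType} {A : finType} (gamma : nat -> R)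
  (n : nat) (w : Omega n A) (u : A) : R :=
  \sum_(i : 'I_n)
     (w (i, u) && [forall j : 'I_n, (j != i) ==> ~~ w (j, u)])%:R
       * (gamma n.+1 / gamma (i : nat).+1).

Definition Rhat {R : realFieldType} {A : finType} (gamma : nat -> R)
  (n : nat) (w : Omega n A) : R :=
  (n%:R)^-1 * \sum_(u : A) Ugamma gamma w u.

(* Main.v *)
Require Import Defs.
From mathcomp Require Import all_boot all_order all_algebra.
From mathcomp.algebra_tactics Require Import ring.
Import Order.TTheory GRing.Theory Num.Theory.
Local Open Scope ring_scope.

Set Implicit Arguments.
Section Aux.
Variables (R : realFieldType) (A : finType) (p : A -> R) (gamma : nat -> R).

Lemma expect_prod n (F : 'I_n * A -> bool -> R) :
  \sum_(w : Omega n A) prob gamma p w * \prod_k F k (w k) =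
  \prod_(k : 'I_n * A) (Defs.pi gamma p (k.1 : nat).+1 k.2 * F k true
           + (1 - Defs.pi gamma p (k.1 : nat).+1 k.2) * F k false).
Proof.
rewrite (eq_bigr (fun k : 'I_n * A => \sum_(b : bool) (if b then Defs.pi gamma p (k.1 : nat).+1 k.2 * F k true
      else (1 - Defs.pi gamma p (k.1 : nat).+1 k.2) * F k false))); last first.
  by move=> k _; rewrite big_bool.
rewrite bigA_distr_bigA; apply: eq_bigr => w _.
rewrite /prob -big_split; apply: eq_bigr => k _ /=; by case: (w k).
Qed.

Lemma pairprod n (G : 'I_n -> A -> R) u :
  \prod_(k : 'I_n * A) (if k.2 == u then G k.1 k.2 else 1) = \prod_i G i u.
Proof.
rewrite -(pair_bigA _ (fun i j => if j == u then G i j else 1)).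
apply: eq_bigr => i _.
by rewrite (bigD1 u) //= eqxx big1 ?mulr1 // => j /negbTE ->.
Qed.

Lemma prod_nat_bool (I : finType) (P : pred I) (b : I -> bool) :
  \prod_(i | P i) ((b i)%:R : R) = ([forall i, P i ==> b i])%:R.
Proof.
case: (boolP [forall i, P i ==> b i]) => [/forallP H | /forallPn [i]].
  by rewrite big1 // => i Pi; move: (H i); rewrite Pi => /= ->.
by rewrite negb_imply => /andP [Pi /negbTE bi]; rewrite (bigD1 i) //= bi mul0r.
Qed.

Definition q n (u : A) (i : 'I_n) : R := 1 - gamma (i : nat).+1 * p u.

Lemma EZ n u : \sum_(w : Omega n A) prob gamma p w * (Zn w u)%:R = \prod_(i : 'I_n) q u i.
Proof.
pose F := fun (k : 'I_n * A) (b : bool) => if k.2 == u then ((~~ b)%:R : R) else 1.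
have E (w : Omega n A) : (Zn w u)%:R = \prod_k F k (w k).
  rewrite /= (eq_bigr (fun k : 'I_n * A => if k.2 == u then
     (fun i v => ((~~ w (i, v))%:R : R)) k.1 k.2 else 1)); last by move=> [j v] _.
  by rewrite (pairprod (fun i v => ((~~ w (i, v))%:R : R))) prod_nat_bool.
rewrite (eq_bigr (fun w : Omega n A => prob gamma p w * \prod_k F k (w k))); last by move=> w _; rewrite E.
rewrite (expect_prod F).
rewrite (eq_bigr (fun k : 'I_n * A => if k.2 == u then (fun i v => q v i) k.1 k.2 else 1)).
  by rewrite (pairprod (fun i v => q v i)).
move=> [j v] _ /=; rewrite /F; case: (v == u); rewrite /q /Defs.pi /=.
  by rewrite mulr0 mulr1 add0r.
by rewrite !mulr1 addrC subrK.
Qed.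

Definition only n (w : Omega n A) u (i : 'I_n) : bool :=
  w (i, u) && [forall j : 'I_n, (j != i) ==> ~~ w (j, u)].

Lemma EO n u (i : 'I_n) : \sum_(w : Omega n A) prob gamma p w * (only w u i)%:R
  = gamma (i : nat).+1 * p u * \prod_(j | j != i) q u j.
Proof.
pose F := fun (k : 'I_n * A) (b : bool) => if k.2 == u then
   (if k.1 == i then (b%:R : R) else (~~ b)%:R) else 1.
have E (w : Omega n A) : (only w u i)%:R = \prod_k F k (w k).
  rewrite (eq_bigr (fun k : 'I_n * A => if k.2 == u then
     (fun j v => if j == i then ((w (j, v))%:R : R) else (~~ w (j, v))%:R) k.1 k.2 else 1)); last by move=> [j v] _.
  rewrite (pairprod (fun j v => if j == i then ((w (j, v))%:R : R) else (~~ w (j, v))%:R)) (bigD1 i) //= eqxx.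
  rewrite (eq_bigr (fun j => ((~~ w (j, u))%:R : R))); last by move=> j /negbTE ->.
  by rewrite prod_nat_bool /only -mulnb natrM.
rewrite (eq_bigr (fun w : Omega n A => prob gamma p w * \prod_k F k (w k))); last by move=> w _; rewrite E.
rewrite (expect_prod F).
rewrite (eq_bigr (fun k : 'I_n * A => if k.2 == u then
    (fun j v => if j == i then gamma (j : nat).+1 * p v else q v j) k.1 k.2 else 1)).
  rewrite (pairprod (fun j v => if j == i then gamma (j : nat).+1 * p v else q v j)) (bigD1 i) //= eqxx; congr (_ * _).
  by apply: eq_bigr => j /negbTE ->.
move=> [j v] _; rewrite /F /=; case: (v == u) => //=; last by ring.
case: (j == i); rewrite /q /Defs.pi /=; ring.
Qed.

End Aux.

Arguments q {R A} p gamma {n} u i.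
Arguments EZ {R A} p gamma n u.
Arguments EO {R A} p gamma {n} u i.
Arguments expect_prod {R A} p gamma {n} F.

Theorem mainTheorem5 (R : realFieldType) (A : finType) (p : A -> R) (gamma : nat -> R)
  (n : nat)
  (hp : forall u, 0 <= p u <= 1)
  (hgamma : forall i, (0 < i)%N -> 0 < gamma i <= 1)
  (hmono : forall i j, (0 < i)%N -> (i <= j)%N -> gamma j <= gamma i)
  (hn : (0 < n)%N) :
  let lambda := \sum_(u : A) p u in
  let d := Expect gamma p (Rn gamma p (n:=n)) - Expect gamma p (Rhat gamma (n:=n)) in
  - (gamma n.+1 * lambda / n%:R) <= d /\ d <= 0.
Proof.
move=> lambda d.
set g := gamma n.+1; set N : R := n%:R.
have Nn0 : N != 0 by rewrite pnatr_eq0 -lt0n.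
have gi0 (i : nat) : gamma i.+1 != 0 by case/andP: (hgamma i.+1 isT) => /lt0r_neq0.
have P01 (i : nat) u : 0 <= gamma i.+1 * p u <= 1.
  case/andP: (hgamma i.+1 isT) => g0 g1; case/andP: (hp u) => p0 p1.
  by apply/andP; split; [exact: mulr_ge0 (ltW g0) p0 | exact: mulr_ile1 (ltW g0) p0 g1 p1].
have ER : Expect gamma p (Rn gamma p (n:=n)) =
    \sum_(u : A) Defs.pi gamma p n.+1 u * \prod_(i : 'I_n) q p gamma u i.
  rewrite /Expect /Rn.
  rewrite (eq_bigr (fun w : Omega n A => \sum_(u : A) prob gamma p w * ((Zn w u)%:R * Defs.pi gamma p n.+1 u))); last by move=> w _; rewrite big_distrr.
  rewrite exchange_big; apply: eq_bigr => u _.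
  rewrite -EZ big_distrr; apply: eq_bigr => w _ /=; ring.
have EH : Expect gamma p (Rhat gamma (n:=n)) = N^-1 * \sum_(u : A) \sum_(i : 'I_n)
    g / gamma (i : nat).+1 * (gamma (i : nat).+1 * p u * \prod_(j | j != i) q p gamma u j).
  rewrite /Expect /Rhat /Ugamma.
  rewrite (eq_bigr (fun w : Omega n A => N^-1 * \sum_(u : A) \sum_(i : 'I_n) prob gamma p w * ((only w u i)%:R * (g / gamma (i : nat).+1)))); last first.
    move=> w _; rewrite mulrCA; congr (_ * _); rewrite big_distrr; apply: eq_bigr => u _.
    by rewrite big_distrr.
  rewrite -big_distrr /=; congr (_ * _).
  rewrite exchange_big; apply: eq_bigr => u _; rewrite exchange_big; apply: eq_bigr => i _.
  rewrite -EO big_distrr; apply: eq_bigr => w _ /=; ring.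
pose T u := \sum_(i : 'I_n) gamma (i : nat).+1 * p u * \prod_(j | j != i) q p gamma u j.
have key : d = - (g / N) * \sum_(u : A) p u * T u.
  rewrite /d ER EH.
  have hu u : Defs.pi gamma p n.+1 u * \prod_(i : 'I_n) q p gamma u i =
      N^-1 * \sum_(i : 'I_n) g * p u * (q p gamma u i * \prod_(j | j != i) q p gamma u j).
    rewrite [in RHS](eq_bigr (fun _ => g * p u * \prod_(i : 'I_n) q p gamma u i)); last first.
      by move=> i _; rewrite [in RHS](bigD1 i).
    rewrite sumr_const card_ord -mulr_natl /Defs.pi.
    by rewrite /g mulKf.
  rewrite (eq_bigr _ (fun u _ => hu u)) -big_distrr -mulrBr -sumrB.
  have -> : - (g / N) * \sum_(u : A) p u * T u =
      N^-1 * \sum_(u : A) - (g * (p u * T u)).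
    by rewrite sumrN -big_distrr /=; ring.
  congr (_ * _); apply: eq_bigr => u _.
  rewrite -sumrB /T big_distrr big_distrr -sumrN; apply: eq_bigr => i _ /=.
  rewrite /q /g; field; exact: gi0.
have sum_prob : \sum_(w : Omega n A) prob gamma p w = 1.
  have h := expect_prod p gamma (fun _ _ => (1:R)); simpl in h.
  transitivity (\sum_(w : Omega n A) prob gamma p w * \prod_(k : 'I_n * A) (1:R)).
    by apply: eq_bigr => w _; rewrite big1_eq mulr1.
  by rewrite h big1 // => k _; rewrite !mulr1 addrC subrK.
have prob_ge0 (w : Omega n A) : 0 <= prob gamma p w.
  apply: prodr_ge0 => k _; case/andP: (P01 k.1 k.2) => h0 h1; case: (w k) => //.
  by rewrite subr_ge0.
have T01 u : 0 <= T u <= 1.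
  have -> : T u = \sum_(w : Omega n A) prob gamma p w * (\sum_(i : 'I_n) only w u i)%:R.
    rewrite /T (eq_bigr (fun i => \sum_(w : Omega n A) prob gamma p w * (only w u i)%:R)); last by move=> i _; rewrite EO.
    rewrite exchange_big; apply: eq_bigr => w _; by rewrite natr_sum big_distrr.
  have s01 (w : Omega n A) : (\sum_(i : 'I_n) only w u i <= 1)%N.
    case: (pickP (only w u)) => [i Hi | none]; last by rewrite big1 // => i _; rewrite none.
    rewrite (bigD1 i) //= big1 ?Hi // => j ji.
    move: Hi; rewrite /only => /andP [_ /forallP /(_ j)]; rewrite ji /= => /negbTE ->.
    by [].
  apply/andP; split; first by apply: sumr_ge0 => w _; rewrite mulr_ge0.
  apply: (@le_trans _ _ (\sum_(w : Omega n A) prob gamma p w * 1)); last first.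
    by rewrite (eq_bigr _ (fun w _ => mulr1 _)) sum_prob.
  apply: ler_sum => w _; rewrite ler_wpM2l //.
  by rewrite lern1.
have gN : 0 <= g / N.
  case/andP: (hgamma n.+1 isT) => g0 _; apply: divr_ge0; [exact: ltW | exact: ler0n].
have S0 : 0 <= \sum_(u : A) p u * T u.
  apply: sumr_ge0 => u _; case/andP: (T01 u) => t0 _; case/andP: (hp u) => p0 _.
  by rewrite mulr_ge0.
have S1 : \sum_(u : A) p u * T u <= lambda.
  apply: ler_sum => u _; case/andP: (T01 u) => _ t1; case/andP: (hp u) => p0 _.
  by rewrite -[leRHS]mulr1 ler_wpM2l.
rewrite key; split.
  by rewrite mulNr lerN2 [leRHS]mulrAC ler_wpM2l.
by rewrite mulNr oppr_le0 mulr_ge0.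
Qed.
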